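(* Let $n\ge3$, let $H$ be a non-trivial finitely generated abelian group, let $G$ be a group with a surjective homomorphism $\sigma\colon G\to S_n$, let $W=H\wr_\sigma G$, and let $\pi\colon W\to G$ be the canonical projection. Assume that every abelian normal subgroup of $W$ is contained in $H^n$, and that $P_\sigma=\ker\sigma$ is characteristic in $G$. Then $PW=\pi^{-1}(P_\sigma)\cong H^n\times P_\sigma$ is characteristic in $W$.
   Context: $H\wr_\sigma G=H^n\rtimes_\sigma G$ is the semidirect product in which $G$ acts on $H^n$ by permuting coordinates through $\sigma$: $g\cdot(h_1,\dots,h_n)=(h_{\sigma(g)(1)},\dots,h_{\sigma(g)(n)})$ (with the composition convention in $S_n$ making this a left action); $H^n$ is identified with $\{(\mathbf h,1)\}$ and $\pi(\mathbf h,g)=g$. *)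

(* Defs.v *)
(* Abstract (possibly infinite) groups are given by raw
   operations on a carrier type; the wreath product is built concretely. *)
From mathcomp Require Import all_boot all_order all_fingroup all_algebra.
Set Implicit Arguments. Unset Strict Implicit. Unset Printing Implicit Defensive.
Import GRing.Theory.
Local Open Scope ring_scope.

Section GroupNotions.
Variables (T : Type) (mul : T -> T -> T) (one : T) (inv : T -> T).

Definition is_group : Prop :=
  [/\ (forall x y z, mul x (mul y z) = mul (mul x y) z),
      (forall x, mul one x = x), (forall x, mul x one = x),
      (forall x, mul (inv x) x = one) & (forall x, mul x (inv x) = one)].

Definition is_subgroup (S : T -> Prop) : Prop :=
  [/\ S one, (forall x y, S x -> S y -> S (mul x y)) & (forall x, S x -> S (inv x))].

Definition is_normal (S : T -> Prop) : Prop :=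
  is_subgroup S /\ forall g x, S x -> S (mul (mul (inv g) x) g).

Definition is_abelian_set (S : T -> Prop) : Prop :=
  forall x y, S x -> S y -> mul x y = mul y x.

Definition is_automorphism (f : T -> T) : Prop :=
  bijective f /\ forall x y, f (mul x y) = mul (f x) (f y).

Definition is_characteristic (S : T -> Prop) : Prop :=
  forall f, is_automorphism f -> forall y, S y <-> exists2 x, S x & f x = y.

End GroupNotions.

Definition fin_generated (H : zmodType) : Prop :=
  exists s : seq H, forall h : H,
    exists c : 'I_(size s) -> int, h = \sum_(i < size s) s`_i *~ c i.

Section Wreath.
Variables (n : nat) (H : zmodType) (G : Type)
          (gmul : G -> G -> G) (gone : G) (ginv : G -> G)
          (sigma : G -> {perm 'I_n}).

(* W = H^n x| G, elements (h, g); g acts by (g.h)_i = h_(sigma g i).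
   With mathcomp's convention (s * t) i = t (s i) this is a left action. *)
Definition wtype := ({ffun 'I_n -> H} * G)%type.

Definition act (g : G) (h : {ffun 'I_n -> H}) : {ffun 'I_n -> H} :=
  [ffun i => h (sigma g i)].

Definition wmul (x y : wtype) : wtype :=
  ([ffun i => x.1 i + act x.2 y.1 i], gmul x.2 y.2).
Definition wone : wtype := ([ffun => 0], gone).
Definition winv (x : wtype) : wtype :=
  ([ffun i => - act (ginv x.2) x.1 i], ginv x.2).

Definition wproj (x : wtype) : G := x.2.

Definition baseHn (x : wtype) : Prop := x.2 = gone.

Definition Psigma (g : G) : Prop := sigma g = 1%g.
Definition PW (x : wtype) : Prop := Psigma (wproj x).

Definition dmul (x y : wtype) : wtype :=
  ([ffun i => x.1 i + y.1 i], gmul x.2 y.2).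

End Wreath.

(* Main.v *)
Require Import Defs.
From mathcomp Require Import all_boot all_order all_fingroup all_algebra.
Set Implicit Arguments. Unset Strict Implicit. Unset Printing Implicit Defensive.
Import GRing.Theory.
Local Open Scope ring_scope.

Lemma grp_uniq_inv T (mul : T -> T -> T) one inv : is_group mul one inv ->
  forall a b, mul a b = one -> a = inv b.
Proof. case=> A l r vl vr a b e. by rewrite -[a]r -(vr b) A e l. Qed.

Lemma hom_one T (mul : T -> T -> T) one inv (f : T -> T) : is_group mul one inv ->
  (forall x y, f (mul x y) = mul (f x) (f y)) -> f one = one.
Proof.
move=> Gg hom; have Gg' := Gg; case: Gg' => A l r vl vr.
have e : mul (f one) (f one) = f one by rewrite -hom l.
by rewrite -[f one]r -{2}(vr (f one)) A e.
Qed.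

Lemma hom_inv T (mul : T -> T -> T) one inv (f : T -> T) : is_group mul one inv ->
  (forall x y, f (mul x y) = mul (f x) (f y)) -> forall x, f (inv x) = inv (f x).
Proof.
move=> Gg hom x; apply: (grp_uniq_inv Gg).
have Gg' := Gg; case: Gg' => A l r vl vr.
by rewrite -hom vl (hom_one Gg hom).
Qed.

Lemma aut_inv T (mul : T -> T -> T) (f : T -> T) : is_automorphism mul f ->
  exists g, [/\ is_automorphism mul g, cancel f g & cancel g f].
Proof.
case=> [[g fg gf] hom]; exists g; split => //; split; first by exists f.
by move=> x y; apply: (can_inj fg); rewrite hom !gf.
Qed.

Theorem theorem3p17
  (n : nat) (hn : (3 <= n)%N)
  (H : zmodType) (H_fg : fin_generated H) (H_nontriv : exists h : H, h != 0)
  (G : Type) (gmul : G -> G -> G) (gone : G) (ginv : G -> G)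
  (G_group : is_group gmul gone ginv)
  (sigma : G -> {perm 'I_n})
  (sigma_hom : forall a b, sigma (gmul a b) = (sigma a * sigma b)%g)
  (sigma_surj : forall s : {perm 'I_n}, exists g, sigma g = s)
  (hAbNormal : forall S : wtype n H G -> Prop,
      is_normal (wmul (H:=H) gmul sigma) (wone n H gone) (winv ginv sigma) S ->
      is_abelian_set (wmul (H:=H) gmul sigma) S ->
      forall x, S x -> baseHn gone x)
  (hPchar : is_characteristic gmul (Psigma sigma)) :
  (exists f : wtype n H G -> wtype n H G,
     [/\ forall x, PW sigma x -> Psigma sigma (f x).2,
         forall y, Psigma sigma y.2 -> exists! x, PW sigma x /\ f x = y
       & forall x y, PW sigma x -> PW sigma y ->
           f (wmul gmul sigma x y) = dmul gmul (f x) (f y)])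
  /\ is_characteristic (wmul (H:=H) gmul sigma) (PW (H:=H) sigma).
Proof.
have Gg := G_group; case: Gg => GA G1l G1r GVl GVr.
have sig1 : sigma gone = 1%g.
  by apply: (mulgI (sigma gone)); rewrite mulg1 -sigma_hom G1l.
have ginv1 : ginv gone = gone by rewrite -{1}(G1l (ginv gone)) GVr.
split.
  exists id; split => //.
  - by move=> y hy; exists y; split => // x' [].
  - move=> [x1 x2] [y1 y2]; rewrite /PW /wproj /Psigma /= => hx hy.
    rewrite /wmul /dmul /=; congr (_, _); apply/ffunP => i.
    by rewrite /act !ffunE hx perm1.
pose wm := wmul (H:=H) gmul sigma.
pose wo := wone n H gone.
pose wi := winv (H:=H) ginv sigma.
have Wg : is_group wm wo wi.
  split.
  - move=> [x1 x2] [y1 y2] [z1 z2]; rewrite /wm /wmul /=; congr (_, _); last exact: GA.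
    apply/ffunP => i; rewrite /act !ffunE sigma_hom permM.
    by rewrite addrA.
  - move=> [x1 x2]; rewrite /wm /wo /wmul /=; congr (_, _); last exact: G1l.
    by apply/ffunP => i; rewrite /act !ffunE sig1 perm1 add0r.
  - move=> [x1 x2]; rewrite /wm /wo /wmul /=; congr (_, _); last exact: G1r.
    by apply/ffunP => i; rewrite /act !ffunE addr0.
  - move=> [x1 x2]; rewrite /wm /wo /wi /wmul /winv /=; congr (_, _); last exact: GVl.
    by apply/ffunP => i; rewrite /act !ffunE addNr.
  - move=> [x1 x2]; rewrite /wm /wo /wi /wmul /winv /=; congr (_, _); last exact: GVr.
    apply/ffunP => i; rewrite /act !ffunE.
    by rewrite -permM -sigma_hom GVr sig1 perm1 subrr.
have keyH : forall phi, is_automorphism wm phi ->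
    forall x, baseHn gone x -> baseHn gone (phi x).
  move=> phi phiA x hx.
  have [[phinv c1 c2] hom] := phiA.
  apply: (hAbNormal (fun y => exists2 x, baseHn gone x & phi x = y)); last by exists x.
    split; first split.
    - by exists wo => //; rewrite (hom_one Wg hom).
    - move=> _ _ [a ha <-] [b hb <-]; exists (wm a b); last by rewrite hom.
      by rewrite /baseHn /= ha hb G1l.
    - move=> _ [a ha <-]; exists (wi a); last by rewrite (hom_inv Wg hom).
      by rewrite /baseHn /= ha ginv1.
    - move=> g _ [a ha <-]; exists (wm (wm (wi (phinv g)) a) (phinv g)).
        by rewrite /baseHn /= ha G1r GVl.
      by rewrite !hom (hom_inv Wg hom) c2.
  move=> _ _ [a ha <-] [b hb <-].
  have e : wm a b = wm b a.
    move: a b ha hb => [a1 a2] [b1 b2]; rewrite /baseHn /= => -> ->.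
    rewrite /wm /wmul /=; congr (_, _); apply/ffunP => i.
    by rewrite /act !ffunE sig1 perm1 addrC.
  by rewrite -[LHS]/(wm (phi a) (phi b)) -hom e hom.
move=> phi phiA.
have [phinv [phinvA c1 c2]] := aut_inv phiA.
have hom := phiA.2.
pose psi g := (phi (([ffun => 0] : {ffun 'I_n -> H}), g)).2.
have phi2 : forall x, (phi x).2 = psi x.2.
  move=> [x1 x2].
  have -> : (x1, x2) = wm (x1, gone) ([ffun => 0], x2).
    rewrite /wm /wmul /=; congr (_, _); last by rewrite G1l.
    by apply/ffunP => i; rewrite /act !ffunE addr0.
  rewrite hom /wm /wmul /=.
  have := keyH phi phiA (x1, gone) erefl; rewrite /baseHn => ->.
  by rewrite !G1l.
have psiM : forall a b, psi (gmul a b) = gmul (psi a) (psi b).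
  move=> a b; rewrite /psi.
  have -> : (([ffun => 0] : {ffun 'I_n -> H}), gmul a b) =
            wm ([ffun => 0], a) ([ffun => 0], b).
    rewrite /wm /wmul /=; congr (_, _).
    by apply/ffunP => i; rewrite /act !ffunE addr0.
  by rewrite hom.
have psi_inj : forall a b, psi a = psi b -> a = b.
  move=> a b e.
  pose u := wm (wi ([ffun => 0], a)) ([ffun => 0], b).
  have hu : baseHn gone (phi u).
    rewrite /baseHn phi2 /u /= psiM.
    have -> : ginv a = ((wi ([ffun => 0], a)).2) by [].
    by rewrite -phi2 (hom_inv Wg hom) /= phi2 /= e GVl.
  have := keyH phinv phinvA _ hu; rewrite c1 /baseHn /u /= => h.
  by rewrite -(G1l b) -(GVr a) -GA h G1r.
have psiA : is_automorphism gmul psi.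
  split => //.
  exists (fun g => (phinv ([ffun => 0], g)).2).
    by move=> g; apply: psi_inj; rewrite -phi2 c2.
  by move=> g; rewrite -phi2 c2.
move=> y; split.
  move=> hy.
  have [g hg eg] := (hPchar psi psiA y.2).1 hy.
  exists (phinv y); last by rewrite c2.
  rewrite /PW /wproj; have -> : (phinv y).2 = g; last by [].
  by apply: psi_inj; rewrite -phi2 c2 eg.
move=> [x hx <-]; rewrite /PW /wproj phi2.
by apply/(hPchar psi psiA _).2; exists x.2.
Qed.
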